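(* Let $(P,A,\lambda)$ be a marked poset, $(U_1,U_2)$ an admissible decomposition, $A_1=A\cup U_1$, and let $\pi_1:\mathbb{R}^{P\setminus A}\to\mathbb{R}^{U_1}$, $\pi_2:\mathbb{R}^{P\setminus A}\to\mathbb{R}^{U_2}$ be the coordinate projections. For a point $s$, let $\lambda^s:A_1\to\mathbb{R}$ be given by $\lambda^s(p)=\lambda_p$ for $p\in A$ and $\lambda^s(p)=s_p$ for $p\in U_1$. Then: (1) for $s\in\mathcal{O}_{P,A}(\lambda)$, $\{\pi_2(y): y\in\mathcal{O}_{P,A}(\lambda),\ \pi_1(y)=\pi_1(s)\}=\mathcal{O}_{P,A_1}(\lambda^s)$; (2) for $s\in\mathcal{CO}_{U_1,U_2}(\lambda)$, $\{\pi_2(y): y\in\mathcal{CO}_{U_1,U_2}(\lambda),\ \pi_1(y)=\pi_1(s)\}=\mathcal{C}_{P,A_1}(\lambda^s)$.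
   Context: A marked poset is a triple $(P,A,\lambda)$ where $(P,\prec)$ is a finite poset, $A\subseteq P$ contains all minimal and all maximal elements of $P$, and $\lambda:A\to\mathbb{Z}_{\ge 0}$, $a\mapsto\lambda_a$. A decomposition of $(P,A,\lambda)$ is a pair $(U_1,U_2)$ of disjoint sets with $U_1\cup U_2=P\setminus A$; it is admissible if there are no $u_1\in U_1$, $u_2\in U_2$ with $u_1\prec u_2$. For any such $(P,A)$, real-valued $\lambda$ on $A$, and decomposition $(U_1,U_2)$ of $P\setminus A$, the marked chain-order polytope $\mathcal{CO}_{U_1,U_2}(\lambda)\subset\mathbb{R}^{P\setminus A}$ is the set of $(x_p)_{p\in P\setminus A}$ such that: (i) $x_p\le\lambda_a$ whenever $p\in U_1$, $a\in A$, $p\prec a$; (ii) $\lambda_b\le x_q$ whenever $q\in U_1$, $b\in A$, $b\prec q$; (iii) $x_p\le x_q$ whenever $p,q\in U_1$, $p\prec q$; (iv) $x_p\ge0$ for $p\in U_2$; (v) for every chain $b\prec p_n\prec\cdots\prec p_1\prec a$ with $n\ge1$, $a,b\in A\cup U_1$, $p_i\in U_2$: $x_{p_1}+\cdots+x_{p_n}\le\lambda_a-\lambda_b$, where $\lambda_q$ means $x_q$ for $q\in U_1$; (vi) for every chain $p_1\prec\cdots\prec p_s\prec q$ with $q\in U_1$, $p_i\in U_2$: $x_{p_1}+\cdots+x_{p_s}\le x_q$. The marked order polytope is $\mathcal{O}_{P,A}(\lambda)=\mathcal{CO}_{P\setminus A,\emptyset}(\lambda)$ and the marked chain polytope is $\mathcal{C}_{P,A}(\lambda)=\mathcal{CO}_{\emptyset,P\setminus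 A}(\lambda)$. Accordingly $\mathcal{O}_{P,A_1}(\lambda^s)$ and $\mathcal{C}_{P,A_1}(\lambda^s)$ are the marked order and marked chain polytopes of $P$ with marked set $A_1$ and marking $\lambda^s$; they lie in $\mathbb{R}^{P\setminus A_1}=\mathbb{R}^{U_2}$. *)

(* Defs.v *)
From HB Require Import structures.
From mathcomp Require Import all_boot all_order all_algebra.
Set Implicit Arguments. Unset Strict Implicit. Unset Printing Implicit Defensive.
Import Order.TTheory GRing.Theory Num.Theory.

(* Points of R^D (D a subset of the finite poset P) are represented as
   functions P -> R that vanish outside D. *)

Section MarkedPoset.
Context {d : Order.disp_t} {P : finPOrderType d} {R : realFieldType}.

Definition marked_set (A : {set P}) : Prop :=
  (forall p : P, (forall q : P, ~~ (q < p)%O) -> p \in A) /\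
  (forall p : P, (forall q : P, ~~ (p < q)%O) -> p \in A).

Definition decomposition (A U1 U2 : {set P}) : Prop :=
  [disjoint U1 & U2] /\ U1 :|: U2 = ~: A.

Definition admissible (A U1 U2 : {set P}) : Prop :=
  decomposition A U1 U2 /\
  (forall u1 u2 : P, u1 \in U1 -> u2 \in U2 -> ~ (u1 < u2)%O).

Definition proj (U : {set P}) (x : P -> R) : P -> R :=
  fun p => if p \in U then x p else 0%R.

(* the marked chain-order polytope CO_{U1,U2}(lam) in R^(P \ A);
   lam is a real marking, only its values on A matter. *)
Definition chain_order_polytope (A U1 U2 : {set P}) (lam : P -> R)
  : (P -> R) -> Prop :=
  fun x =>
  let lamx := fun q => if q \in U1 then x q else lam q in
  (forall p, p \in A -> x p = 0%R) /\
  (forall p a, p \in U1 -> a \in A -> (p < a)%O -> (x p <= lam a)%R) /\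
  (forall q b, q \in U1 -> b \in A -> (b < q)%O -> (lam b <= x q)%R) /\
  (forall p q, p \in U1 -> q \in U1 -> (p < q)%O -> (x p <= x q)%R) /\
  (forall p, p \in U2 -> (0 <= x p)%R) /\
  (* (v) chains b < p_n < ... < p_1 < a, n >= 1, written s = [:: p_1; ...; p_n] *)
  (forall (a b : P) (s : seq P),
      a \in A :|: U1 -> b \in A :|: U1 -> s != [::] ->
      all (fun p => p \in U2) s ->
      path (fun u v => (v < u)%O) a s -> (b < last a s)%O ->
      (\sum_(p <- s) x p <= lamx a - lamx b)%R) /\
  (* (vi) chains p_1 < ... < p_s < q, s >= 1 *)
  (forall (q : P) (s : seq P),
      q \in U1 -> s != [::] -> all (fun p => p \in U2) s ->
      sorted (fun u v => (u < v)%O) (rcons s q) ->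
      (\sum_(p <- s) x p <= x q)%R).

Definition order_polytope (A : {set P}) (lam : P -> R) :=
  chain_order_polytope A (~: A) set0 lam.

Definition chain_polytope (A : {set P}) (lam : P -> R) :=
  chain_order_polytope A set0 (~: A) lam.

Definition lam_s (A : {set P}) (lam : P -> nat) (s : P -> R) : P -> R :=
  fun p => if p \in A then (lam p)%:R%R else s p.

End MarkedPoset.

(* Main.v *)
Require Import Defs.
From mathcomp Require Import all_boot all_order all_algebra.
From Stdlib Require Import FunctionalExtensionality.
Import Order.TTheory GRing.Theory Num.Theory.

Lemma below_marked (d : Order.disp_t) (P : finPOrderType d) (A : {set P}) :
  (forall p : P, (forall q : P, ~~ (q < p)%O) -> p \in A) ->
  forall p, p \notin A -> exists2 b, b \in A & (b < p)%O.
Proof.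
move=> Hmin.
suff H : forall n p, #|[set q | (q < p)%O]| <= n -> exists2 b, b \in A & (b <= p)%O.
  move=> p pA; have [b bA bp] := H _ p (leqnn _).
  exists b => //; rewrite lt_neqAle bp andbT; apply/eqP => E; by rewrite -E bA in pA.
elim=> [|n IH] p.
  rewrite leqn0 => /eqP/cards0_eq E.
  exists p; last by [].
  apply: Hmin => q; apply/negP => qp.
  by have := in_set0 q; rewrite -E inE qp.
move=> Hc; case pA: (p \in A); first by exists p.
case: (boolP [exists q, (q < p)%O]) => [/existsP [q qp]|/existsPn nq].
  have [|b bA bq] := IH q.
    rewrite -ltnS; apply: leq_trans Hc; apply: proper_card.
    apply/properP; split.
      by apply/subsetP => r; rewrite !inE => rq; apply: lt_trans rq qp.
    by exists q; rewrite !inE ?qp ?ltxx.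
  by exists b => //; apply: le_trans bq (ltW qp).
by rewrite Hmin in pA.
Qed.
Theorem lemma1p15 (d : Order.disp_t) (P : finPOrderType d) (R : realFieldType)
  (A : {set P}) (lam : P -> nat) (U1 U2 : {set P}) :
  marked_set A ->
  admissible A U1 U2 ->
  let A1 := A :|: U1 in
  let lamR := fun p => ((lam p)%:R : R)%R in
  (forall s : P -> R, order_polytope A lamR s ->
     forall z : P -> R,
       (exists y, order_polytope A lamR y /\ proj U1 y = proj U1 s /\ proj U2 y = z)
       <-> order_polytope A1 (lam_s A lam s) z) /\
  (forall s : P -> R, chain_order_polytope A U1 U2 lamR s ->
     forall z : P -> R,
       (exists y, chain_order_polytope A U1 U2 lamR y /\ proj U1 y = proj U1 s /\ proj U2 y = z)
       <-> chain_polytope A1 (lam_s A lam s) z).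
Proof.
move=> [Hmin _] [[Hdis HU] _] A1 lamR.
have U1A p : p \in U1 -> p \notin A.
  move=> pU; have : p \in ~: A by rewrite -HU inE pU.
  by rewrite inE.
have U2A p : p \in U2 -> p \notin A.
  move=> pU; have : p \in ~: A by rewrite -HU inE pU orbT.
  by rewrite inE.
have U21 p : p \in U2 -> p \notin U1 by move=> pU; rewrite (disjointFl Hdis pU).
have nA p : p \notin A -> (p \in U1) || (p \in U2).
  move=> pA; have : p \in ~: A by rewrite inE.
  by rewrite -HU inE.
have nU1 p : p \in ~: A -> p \notin U1 -> p \in U2.
  by move=> pA pU; move: (nA p); rewrite (negbTE pU) /=; apply; rewrite -in_setC.
have CA1 : ~: A1 = U2.
  apply/setP => p; rewrite !inE; case pU2: (p \in U2).
    by rewrite (negbTE (U2A _ pU2)) (negbTE (U21 _ pU2)).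
  by case pA: (p \in A) => //=; have := nA p; rewrite pA pU2 orbF => /(_ isT) ->.
have A1U2 p : (p \in A1) = (p \notin U2) by rewrite -CA1 in_setC negbK.
have yU1 (y s : P -> R) p : proj U1 y = proj U1 s -> p \in U1 -> y p = s p.
  by move=> /(congr1 (fun f => f p)); rewrite /proj => + pU; rewrite pU.
have notin0 (p : P) : (p \in (set0 : {set P})) = false by rewrite inE.
have alls0 (s : seq P) : s != [::] -> all (fun p => p \in (set0 : {set P})) s -> False.
  by case: s => [|x s] //= _; rewrite inE.
split.
- move=> s Hs z; split.
  + move=> [y [Hy [H1 <-]]].
    move: Hy => [Hy0 [Hyi [Hyii [Hyiii _]]]].
    rewrite /order_polytope /chain_order_polytope CA1 /=.
    split; [|split; [|split; [|split; [|split; [|split]]]]].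
    * by move=> p; rewrite A1U2 /proj => /negbTE ->.
    * move=> p a pU aA pa; rewrite /proj pU /lam_s.
      have pA := U2A _ pU; have pA' : p \in ~: A by rewrite inE.
      case aA': (a \in A); first exact: Hyi.
      move: aA; rewrite inE aA' /= => aU.
      rewrite -(yU1 _ _ _ H1 aU); apply: Hyiii => //; by rewrite inE U1A.
    * move=> q b qU bA bq; rewrite /proj qU /lam_s.
      have qA' : q \in ~: A by rewrite inE U2A.
      case bA': (b \in A); first exact: Hyii.
      move: bA; rewrite inE bA' /= => bU.
      rewrite -(yU1 _ _ _ H1 bU); apply: Hyiii => //; by rewrite inE U1A.
    * move=> p q pU qU pq; rewrite /proj pU qU; apply: Hyiii => //; by rewrite inE U2A.
    * by move=> p; rewrite notin0.
    * by move=> a b t _ _ tn /(alls0 _ tn).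
    * by move=> q t _ tn /(alls0 _ tn).
  + move=> Hz.
    move: Hz; rewrite /order_polytope /chain_order_polytope CA1 /=.
    move=> [Hz0 [Hzi [Hzii [Hziii _]]]].
    move: Hs => [Hs0 [Hsi [Hsii [Hsiii _]]]].
    exists (fun p => if p \in U1 then s p else z p).
    split; [|split].
    * split; [|split; [|split; [|split; [|split; [|split]]]]].
      -- move=> p pA; have pU : p \notin U1 by apply/negP => pU; move: (U1A p pU); rewrite pA.
         rewrite (negbTE pU); apply: Hz0; by rewrite inE pA.
      -- move=> p a pA aA pa; case pU: (p \in U1); first exact: Hsi.
         have pU2 : p \in U2 by apply: nU1; rewrite ?pU.
         by have := Hzi p a pU2; rewrite /lam_s aA; apply => //; rewrite inE aA.
      -- move=> q b qA bA bq; case qU: (q \in U1); first exact: Hsii.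
         have qU2 : q \in U2 by apply: nU1; rewrite ?qU.
         by have := Hzii q b qU2; rewrite /lam_s bA; apply => //; rewrite inE bA.
      -- move=> p q pA qA pq.
         have pU2 := nU1 p pA; have qU2 := nU1 q qA.
         case pU: (p \in U1); case qU: (q \in U1).
         ++ exact: Hsiii.
         ++ have := Hzii q p (qU2 (negbT qU)); rewrite /lam_s (negbTE (U1A _ pU)).
            by apply => //; rewrite inE pU orbT.
         ++ have := Hzi p q (pU2 (negbT pU)); rewrite /lam_s (negbTE (U1A _ qU)).
            by apply => //; rewrite inE qU orbT.
         ++ exact: Hziii (pU2 (negbT pU)) (qU2 (negbT qU)) pq.
      -- by move=> p; rewrite notin0.
      -- by move=> a b t _ _ tn /(alls0 _ tn).
      -- by move=> q t _ tn /(alls0 _ tn).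
    * by apply: functional_extensionality => p; rewrite /proj; case: (p \in U1).
    * apply: functional_extensionality => p; rewrite /proj.
      case pU2: (p \in U2); first by rewrite (negbTE (U21 _ pU2)).
      symmetry; apply: Hz0; by rewrite A1U2 pU2.
- have hlam (y s : P -> R) a : proj U1 y = proj U1 s -> a \in A :|: U1 ->
      (if a \in U1 then y a else lamR a) = lam_s A lam s a.
    move=> H1; rewrite inE /lam_s; case aU: (a \in U1).
      by rewrite (negbTE (U1A _ aU)) => _; apply: yU1 H1 aU.
    by rewrite orbF => ->.
  move=> s Hs z; split.
  + move=> [y [Hy [H1 <-]]].
    move: Hy => [Hy0 [Hyi [Hyii [Hyiii [Hyiv [Hyv Hyvi]]]]]].
    rewrite /chain_polytope /chain_order_polytope CA1 /=.
    split; [|split; [|split; [|split; [|split; [|split]]]]].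
    * by move=> p; rewrite A1U2 /proj => /negbTE ->.
    * by move=> p; rewrite notin0.
    * by move=> p; rewrite notin0.
    * by move=> p; rewrite notin0.
    * by move=> p pU; rewrite /proj pU; apply: Hyiv.
    * move=> a b t aA bA tn tU pt bt.
      rewrite !notin0.
      have -> : (\sum_(p <- t) proj U2 y p = \sum_(p <- t) y p)%R.
        by apply: eq_big_seq => p pt'; rewrite /proj (allP tU p pt').
      rewrite setU0 in aA; rewrite setU0 in bA.
      rewrite -(hlam y s a H1 aA) -(hlam y s b H1 bA).
      exact: Hyv.
    * by move=> q; rewrite notin0.
  + move=> Hz.
    move: Hz; rewrite /chain_polytope /chain_order_polytope CA1 /=.
    move=> [Hz0 [_ [_ [_ [Hziv [Hzv _]]]]]].
    move: Hs => [Hs0 [Hsi [Hsii [Hsiii _]]]].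
    set y := (fun p => if p \in U1 then s p else z p).
    have H1 : proj U1 y = proj U1 s.
      by apply: functional_extensionality => p; rewrite /proj /y; case: (p \in U1).
    have sumyz (t : seq P) : all (fun p => p \in U2) t -> (\sum_(p <- t) y p = \sum_(p <- t) z p)%R.
      by move=> tU; apply: eq_big_seq => p pt'; rewrite /y (negbTE (U21 _ (allP tU p pt'))).
    exists y.
    split; [|split]; last first.
    * apply: functional_extensionality => p; rewrite /proj /y.
      case pU2: (p \in U2); first by rewrite (negbTE (U21 _ pU2)).
      symmetry; apply: Hz0; by rewrite A1U2 pU2.
    * exact: H1.
    split; [|split; [|split; [|split; [|split; [|split]]]]].
      -- move=> p pA; have pU : p \notin U1 by apply/negP => pU; move: (U1A p pU); rewrite pA.
         rewrite /y (negbTE pU); apply: Hz0; by rewrite inE pA.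
      -- by move=> p a pU aA pa; rewrite /y pU; apply: Hsi.
      -- by move=> q b qU bA bq; rewrite /y qU; apply: Hsii.
      -- by move=> p q pU qU pq; rewrite /y pU qU; apply: Hsiii.
      -- by move=> p pU; rewrite /y (negbTE (U21 _ pU)); apply: Hziv.
      -- move=> a b t aA bA tn tU pt bt.
         rewrite (sumyz t tU) (hlam y s a H1 aA) (hlam y s b H1 bA).
         have := Hzv a b t; rewrite !notin0 !setU0; apply => //.
      -- move=> q t qU tn tU st.
         case: t tn tU st => [//|x t] _ tU st.
         have xU : x \in U2 by move: tU => /= /andP[].
         have [b bA bx] := @below_marked _ _ A Hmin _ (U2A _ xU).
         have := Hzv q b (rev (x :: t)); rewrite !notin0 !setU0.
         rewrite /lam_s bA (negbTE (U1A _ qU)).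
         rewrite big_rev -(sumyz _ tU) => H.
         rewrite /y qU; apply: le_trans (H _ _ _ _ _ _) _.
         ++ by rewrite inE qU orbT.
         ++ by rewrite inE bA.
         ++ by rewrite rev_cons; case: (rev t).
         ++ by rewrite all_rev.
         ++ by rewrite -rev_sorted rev_rcons /= in st.
         ++ by rewrite rev_cons last_rcons.
         ++ by rewrite lerBlDr lerDl.
Qed.
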